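(* Let $\mathfrak{R}$ be an alternative ring with a nontrivial idempotent $e_1$ and Peirce decomposition $\mathfrak{R}=\mathfrak{R}_{11}\oplus\mathfrak{R}_{12}\oplus\mathfrak{R}_{21}\oplus\mathfrak{R}_{22}$, satisfying: (i) if $a_{11}\in\mathfrak{R}_{11}$, $a_{22}\in\mathfrak{R}_{22}$ and $[a_{11}+a_{22},\mathfrak{R}_{12}]=0$, then $a_{11}+a_{22}\in\mathcal{Z}(\mathfrak{R})$; (ii) if $a_{11}\in\mathfrak{R}_{11}$, $a_{22}\in\mathfrak{R}_{22}$ and $[a_{11}+a_{22},\mathfrak{R}_{21}]=0$, then $a_{11}+a_{22}\in\mathcal{Z}(\mathfrak{R})$. Let $\mathcal{D}$ be a multiplicative Lie-type derivation of $\mathfrak{R}$. Then for any $a_{11}\in\mathfrak{R}_{11}$ and $b_{ij}\in\mathfrak{R}_{ij}$ with $i\neq j$ there exists $z_{a_{11},b_{ij}}\in\mathcal{Z}(\mathfrak{R})$ such that $\mathcal{D}(a_{11}+b_{ij})=\mathcal{D}(a_{11})+\mathcal{D}(b_{ij})+z_{a_{11},b_{ij}}$.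
   Context: Rings are not assumed associative or unital. The associator is $(x,y,z)=(xy)z-x(yz)$; $\mathfrak{R}$ is alternative if $(x,x,y)=0=(y,x,x)$ for all $x,y$. $[x,y]=xy-yx$ and $\mathcal{Z}(\mathfrak{R})=\{r: [r,x]=0\ \forall x\in\mathfrak{R}\}$. Define $p_1(x)=x$, $p_n(x_1,\dots,x_n)=[p_{n-1}(x_1,\dots,x_{n-1}),x_n]$. For $n\ge2$, a (not necessarily additive) map $\mathcal{D}\colon\mathfrak{R}\to\mathfrak{R}$ is a multiplicative Lie $n$-derivation if $\mathcal{D}(p_n(x_1,\dots,x_n))=\sum_{i=1}^n p_n(x_1,\dots,\mathcal{D}(x_i),\dots,x_n)$ for all $x_i\in\mathfrak{R}$; a multiplicative Lie-type derivation is a multiplicative Lie $n$-derivation for some $n\ge2$. A nontrivial idempotent is $e_1\ne0$ with $e_1^2=e_1$ which is not a multiplicative identity. With $e_2a:=a-e_1a$, $ae_2:=a-ae_1$, set $\mathfrak{R}_{ij}=e_i\mathfrak{R}e_j$ ($i,j=1,2$), so $\mathfrak{R}=\bigoplus_{i,j}\mathfrak{R}_{ij}$. *)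

(* Defs.v *)
(* A (not necessarily associative, not necessarily unital)
   ring is an abelian group (zmodType) with a biadditive multiplication. *)
From mathcomp Require Import all_boot all_algebra.
Set Implicit Arguments. Unset Strict Implicit. Unset Printing Implicit Defensive.
Import GRing.Theory.
Local Open Scope ring_scope.

Section NonAssoc.
Variables (R : zmodType) (mul : R -> R -> R).

Definition nonassoc_ring : Prop :=
  (forall x y z, mul (x + y) z = mul x z + mul y z) /\
  (forall x y z, mul x (y + z) = mul x y + mul x z).

Definition associator (x y z : R) : R := mul (mul x y) z - mul x (mul y z).

Definition alternative : Prop :=
  forall x y, associator x x y = 0 /\ associator y x x = 0.

Definition commr (x y : R) : R := mul x y - mul y x.

Definition in_center (r : R) : Prop := forall x, commr r x = 0.

(* lie_poly k xs = p_{k+1}(xs 0, ..., xs k):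
   p_1(x) = x, p_n(x_1..x_n) = [p_{n-1}(x_1..x_{n-1}), x_n] *)
Fixpoint lie_poly (k : nat) (xs : nat -> R) : R :=
  match k with
  | 0 => xs 0%N
  | k'.+1 => commr (lie_poly k' xs) (xs k)
  end.

Definition upd (xs : nat -> R) (i : nat) (v : R) : nat -> R :=
  fun j => if j == i then v else xs j.

(* multiplicative Lie n-derivation (n >= 2), no additivity assumed;
   the arguments x_1..x_n are xs 0, ..., xs (n-1) *)
Definition lie_n_derivation (n : nat) (D : R -> R) : Prop :=
  forall xs : nat -> R,
    D (lie_poly n.-1 xs) =
    \sum_(i < n) lie_poly n.-1 (upd xs i (D (xs i))).

Definition lie_type_derivation (D : R -> R) : Prop :=
  exists2 n, (2 <= n)%N & lie_n_derivation n D.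

Definition nontrivial_idempotent (e1 : R) : Prop :=
  e1 <> 0 /\ mul e1 e1 = e1 /\ ~ (forall x, mul e1 x = x /\ mul x e1 = x).

(* Peirce components: index true = 1, false = 2.
   e_1 a := e1 a, e_2 a := a - e1 a; a e_1 := a e1, a e_2 := a - a e1. *)
Definition lmul_e (e1 : R) (i : bool) (a : R) : R :=
  if i then mul e1 a else a - mul e1 a.
Definition rmul_e (e1 : R) (j : bool) (a : R) : R :=
  if j then mul a e1 else a - mul a e1.

Definition in_peirce (e1 : R) (i j : bool) (x : R) : Prop :=
  exists a, x = rmul_e e1 j (lmul_e e1 i a).

End NonAssoc.

(* Main.v *)
Require Import Defs.
From mathcomp Require Import all_boot all_algebra.
Import GRing.Theory.
Local Open Scope ring_scope.
Set Implicit Arguments. Unset Strict Implicit.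


Lemma nmul0l (R : zmodType) (mul : R -> R -> R) (Hm : nonassoc_ring mul) y :
  mul 0 y = 0.
Proof.
have h : mul 0 y + mul 0 y = mul 0 y + 0 by rewrite -Hm.1 !addr0.
by move/addrI: h.
Qed.
Lemma nmul0r (R : zmodType) (mul : R -> R -> R) (Hm : nonassoc_ring mul) y :
  mul y 0 = 0.
Proof.
have h : mul y 0 + mul y 0 = mul y 0 + 0 by rewrite -Hm.2 !addr0.
by move/addrI: h.
Qed.
Lemma nmulNl (R : zmodType) (mul : R -> R -> R) (Hm : nonassoc_ring mul) x y :
  mul (- x) y = - mul x y.
Proof.
by apply/eqP; rewrite -subr_eq0 opprK -Hm.1 addNr (nmul0l Hm).
Qed.
Lemma nmulNr (R : zmodType) (mul : R -> R -> R) (Hm : nonassoc_ring mul) x y :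
  mul y (- x) = - mul y x.
Proof.
by apply/eqP; rewrite -subr_eq0 opprK -Hm.2 addNr (nmul0r Hm).
Qed.
Lemma nmulBl (R : zmodType) (mul : R -> R -> R) (Hm : nonassoc_ring mul) x y z :
  mul (x - y) z = mul x z - mul y z.
Proof. by rewrite Hm.1 (nmulNl Hm). Qed.
Lemma nmulBr (R : zmodType) (mul : R -> R -> R) (Hm : nonassoc_ring mul) x y z :
  mul z (x - y) = mul z x - mul z y.
Proof. by rewrite Hm.2 (nmulNr Hm). Qed.

Lemma assocDl (R : zmodType) (mul : R -> R -> R) (Hm : nonassoc_ring mul) x y z w :
  associator mul (x + y) z w = associator mul x z w + associator mul y z w.
Proof.
by rewrite /associator !Hm.1 opprD addrACA.
Qed.
Lemma assocDm (R : zmodType) (mul : R -> R -> R) (Hm : nonassoc_ring mul) x y z w :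
  associator mul z (x + y) w = associator mul z x w + associator mul z y w.
Proof.
by rewrite /associator; do 3 rewrite ?Hm.1 ?Hm.2; rewrite opprD addrACA.
Qed.
Lemma assocDr (R : zmodType) (mul : R -> R -> R) (Hm : nonassoc_ring mul) x y z w :
  associator mul z w (x + y) = associator mul z w x + associator mul z w y.
Proof.
by rewrite /associator !Hm.2 opprD addrACA.
Qed.

Lemma swap12 (R : zmodType) (mul : R -> R -> R) (Hm : nonassoc_ring mul)
  (Ha : alternative mul) x y z :
  associator mul y x z = - associator mul x y z.
Proof.
have := (Ha (x + y) z).1.
rewrite !(assocDl Hm) !(assocDm Hm) (Ha x z).1 (Ha y z).1 add0r addr0 => h.
by apply/eqP; rewrite -subr_eq0 opprK addrC h.
Qed.
Lemma swap23 (R : zmodType) (mul : R -> R -> R) (Hm : nonassoc_ring mul)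
  (Ha : alternative mul) x y z :
  associator mul x z y = - associator mul x y z.
Proof.
have := (Ha (y + z) x).2.
rewrite !(assocDr Hm) !(assocDm Hm) (Ha y x).2 (Ha z x).2 add0r addr0 => h.
by apply/eqP; rewrite -subr_eq0 opprK h.
Qed.


Definition ptyp (R : zmodType) (mul : R -> R -> R) E (a b : bool) z :=
  mul E z = (if a then z else 0) /\ mul z E = (if b then z else 0).

Lemma sub0_eq (R : zmodType) (x y : R) : x - y = 0 -> x = y.
Proof. by move/eqP; rewrite subr_eq0 => /eqP. Qed.

Lemma F1 (R : zmodType) (mul : R -> R -> R) (Hm : nonassoc_ring mul)
  (Ha : alternative mul) E (HE : mul E E = E) x :
  mul E (mul E x) = mul E x.
Proof. have := (Ha E x).1; rewrite /associator => h; rewrite HE in h; exact/esym/sub0_eq. Qed.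
Lemma F2 (R : zmodType) (mul : R -> R -> R) (Hm : nonassoc_ring mul)
  (Ha : alternative mul) E (HE : mul E E = E) x :
  mul (mul x E) E = mul x E.
Proof. have := (Ha E x).2; rewrite /associator => h; rewrite HE in h; exact/sub0_eq. Qed.
Lemma F3 (R : zmodType) (mul : R -> R -> R) (Hm : nonassoc_ring mul)
  (Ha : alternative mul) E x :
  mul (mul E x) E = mul E (mul x E).
Proof.
have := swap23 Hm Ha E E x; rewrite (Ha E x).1 oppr0 /associator.
exact: sub0_eq.
Qed.

Lemma peirce_T (R : zmodType) (mul : R -> R -> R) (Hm : nonassoc_ring mul)
  (Ha : alternative mul) E (HE : mul E E = E) i j x :
  in_peirce mul E i j x -> ptyp mul E i j x.
Proof.
have F1' := F1 Hm Ha HE; have F2' := F2 Hm Ha HE; have F3' := F3 Hm Ha E.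
have Ez : forall y, mul E (y - mul E y) = 0.
  by move=> y; rewrite (nmulBr Hm) F1' subrr.
case=> a ->; case: i; case: j; rewrite /ptyp /rmul_e /lmul_e /=.
- by rewrite -F3' F1' F2'.
- rewrite (nmulBr Hm) -F3' !F1' (nmulBl Hm) F2' subrr; split=> //.
- by rewrite -F3' Ez (nmul0l Hm) F2'.
- rewrite (nmulBr Hm) -F3' Ez (nmul0l Hm) subrr (nmulBl Hm) F2' subrr; split=> //.
Qed.

Lemma six (R : zmodType) (mul : R -> R -> R) (Hm : nonassoc_ring mul)
  (Ha : alternative mul) E x y :
  let al := associator mul E x y in
  [/\ mul (mul E x) y - mul E (mul x y) = al,
      mul (mul x E) y - mul x (mul E y) = - al &
      mul (mul x y) E - mul x (mul y E) = al] /\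
  [/\ mul (mul E y) x - mul E (mul y x) = - al,
      mul (mul y E) x - mul y (mul E x) = al &
      mul (mul y x) E - mul y (mul x E) = - al].
Proof.
move=> al; split; split.
- by [].
- by change (associator mul x E y = - al); rewrite (swap12 Hm Ha E x y).
- by change (associator mul x y E = al); rewrite (swap23 Hm Ha x E y) (swap12 Hm Ha E x y) opprK.
- by change (associator mul E y x = - al); rewrite (swap23 Hm Ha E x y).
- by change (associator mul y E x = al); rewrite (swap12 Hm Ha E y x) (swap23 Hm Ha E x y) opprK.
- by change (associator mul y x E = - al); rewrite (swap23 Hm Ha y E x) (swap12 Hm Ha E y x) (swap23 Hm Ha E x y) !opprK.
Qed.


Ltac prep Hm Ha E x y Ex xE Ey yE :=
  have := six Hm Ha E x y; rewrite /=;
  rewrite ?Ex ?xE ?Ey ?yE; do 3 rewrite ?(nmul0l Hm) ?(nmul0r Hm) ?subrr ?subr0 ?sub0r.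

Lemma L1 (R : zmodType) (mul : R -> R -> R) (Hm : nonassoc_ring mul)
  (Ha : alternative mul) E x y :
  ptyp mul E true true x -> ptyp mul E false true y ->
  mul x y = 0 /\ ptyp mul E false true (mul y x).
Proof.
case=> /= Ex xE [] /= Ey yE.
prep Hm Ha E x y Ex xE Ey yE => -[[e1 e2 e3] [e4 e5 e6]].
rewrite -e5 ?oppr0 in e1 e2 e3 e4 e6.
split; first by [].
split; first by apply/eqP; rewrite -oppr_eq0 e4.
exact: sub0_eq.
Qed.

Ltac fin :=
  match goal with
  | |- _ /\ _ => split; fin
  | |- ptyp _ _ _ _ _ => split; rewrite /=; fin
  | _ => first [ by []
               | by apply: sub0_eq; assumption
               | by apply/esym/sub0_eq; assumption
               | by apply/eqP; rewrite -oppr_eq0; apply/eqP; assumption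
               | by apply/esym; assumption ]
  end.

Lemma L2 (R : zmodType) (mul : R -> R -> R) (Hm : nonassoc_ring mul)
  (Ha : alternative mul) E x y :
  ptyp mul E false false x -> ptyp mul E false true y ->
  ptyp mul E false true (mul x y) /\ mul y x = 0.
Proof.
case=> /= Ex xE [] /= Ey yE.
prep Hm Ha E x y Ex xE Ey yE => -[[e1 e2 e3] [e4 e5 e6]].
have hal : associator mul E x y = 0 by first [exact: esym e2 | apply/eqP; rewrite -oppr_eq0 -e2].
rewrite hal ?oppr0 in e1 e2 e3 e4 e5 e6; fin.
Qed.

Lemma L3 (R : zmodType) (mul : R -> R -> R) (Hm : nonassoc_ring mul)
  (Ha : alternative mul) E x y :
  ptyp mul E true true x -> ptyp mul E true false y ->
  ptyp mul E true false (mul x y) /\ mul y x = 0.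
Proof.
case=> /= Ex xE [] /= Ey yE.
prep Hm Ha E x y Ex xE Ey yE => -[[e1 e2 e3] [e4 e5 e6]].
have hal : associator mul E x y = 0 by first [exact: esym e2 | apply/eqP; rewrite -oppr_eq0 -e2].
rewrite hal ?oppr0 in e1 e2 e3 e4 e5 e6; fin.
Qed.

Lemma L4 (R : zmodType) (mul : R -> R -> R) (Hm : nonassoc_ring mul)
  (Ha : alternative mul) E x y :
  ptyp mul E false false x -> ptyp mul E true false y ->
  mul x y = 0 /\ ptyp mul E true false (mul y x).
Proof.
case=> /= Ex xE [] /= Ey yE.
prep Hm Ha E x y Ex xE Ey yE => -[[e1 e2 e3] [e4 e5 e6]].
have hal : associator mul E x y = 0 by first [exact: esym e5 | apply/eqP; rewrite -oppr_eq0 -e5].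
rewrite hal ?oppr0 in e1 e2 e3 e4 e5 e6; fin.
Qed.

Lemma L5 (R : zmodType) (mul : R -> R -> R) (Hm : nonassoc_ring mul)
  (Ha : alternative mul) E x y :
  ptyp mul E true false x -> ptyp mul E false true y ->
  ptyp mul E true true (mul x y) /\ ptyp mul E false false (mul y x).
Proof.
case=> /= Ex xE [] /= Ey yE.
prep Hm Ha E x y Ex xE Ey yE => -[[e1 e2 e3] [e4 e5 e6]].
have hal : associator mul E x y = 0 by first [exact: esym e2 | apply/eqP; rewrite -oppr_eq0 -e2].
rewrite hal ?oppr0 in e1 e2 e3 e4 e5 e6; fin.
Qed.


Lemma commrDl (R : zmodType) (mul : R -> R -> R) (Hm : nonassoc_ring mul) x y z :
  commr mul (x + y) z = commr mul x z + commr mul y z.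
Proof. by rewrite /commr Hm.1 Hm.2 opprD addrACA. Qed.

Lemma lie_ext (R : zmodType) (mul : R -> R -> R) k xs ys :
  (forall j, xs j = ys j) -> lie_poly mul k xs = lie_poly mul k ys.
Proof. by move=> h; elim: k => [|k IH] /=; rewrite ?IH h. Qed.

Lemma lie_add0 (R : zmodType) (mul : R -> R -> R) (Hm : nonassoc_ring mul) k xs u v :
  lie_poly mul k (upd xs 0 (u + v)) =
  lie_poly mul k (upd xs 0 u) + lie_poly mul k (upd xs 0 v).
Proof.
elim: k => [|k IH] /=; first by rewrite /upd.
by rewrite IH commrDl.
Qed.

Lemma addf0 (R : zmodType) (f : R -> R) :
  (forall u v, f (u + v) = f u + f v) -> f 0 = 0.
Proof. move=> h; have := h 0 0; rewrite addr0 => e; apply/esym; move: e.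
by rewrite -{1}[f 0]addr0 => /addrI. Qed.

Lemma addfB (R : zmodType) (f : R -> R) :
  (forall u v, f (u + v) = f u + f v) -> forall u v, f (u - v) = f u - f v.
Proof.
move=> h u v; have hN : f (- v) = - f v.
  by apply/eqP; rewrite -subr_eq0 opprK -h addNr (addf0 h).
by rewrite h hN.
Qed.

Lemma grp (R : zmodType) (a b c t1 t2 : R) :
  (a + (t1 + t2)) - (b + t1) - (c + t2) = a - b - c.
Proof.
rewrite opprD addrACA [t1 + t2]addrC addrK opprD addrACA subrr addr0.
by [].
Qed.

Lemma lie_zero_first (R : zmodType) (mul : R -> R -> R) (Hm : nonassoc_ring mul) k xs :
  xs 0%N = 0 -> lie_poly mul k xs = 0.
Proof.
move=> h; elim: k => [|k IH] //=.
by rewrite IH /commr (nmul0l Hm) (nmul0r Hm) subrr.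
Qed.

Lemma lie_zero_last (R : zmodType) (mul : R -> R -> R) (Hm : nonassoc_ring mul) k xs :
  xs k.+1 = 0 -> lie_poly mul k.+1 xs = 0.
Proof. by move=> h /=; rewrite h /commr (nmul0l Hm) (nmul0r Hm) subrr. Qed.

Lemma D0 (R : zmodType) (mul : R -> R -> R) (Hm : nonassoc_ring mul) m D :
  lie_n_derivation mul m.+2 D -> D 0 = 0.
Proof.
move=> HD; have := HD (fun _ => 0).
rewrite (lie_zero_first Hm) // => ->.
apply: big1 => i _.
case: (eqVneq (i : nat) 0%N) => [i0|in0].
  by apply: (lie_zero_last Hm); rewrite /upd i0.
by apply: (lie_zero_first Hm); rewrite /upd eq_sym (negbTE in0).
Qed.

Definition Tsum (R : zmodType) (mul : R -> R -> R) m D (ys : nat -> R) (u : R) :=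
  \sum_(i < m.+1) lie_poly mul m.+1 (upd (upd ys i.+1 (D (ys i.+1))) 0 u).

Lemma Dlie (R : zmodType) (mul : R -> R -> R) m D :
  lie_n_derivation mul m.+2 D -> forall ys u,
  D (lie_poly mul m.+1 (upd ys 0 u)) =
  lie_poly mul m.+1 (upd ys 0 (D u)) + Tsum mul m D ys u.
Proof.
move=> HD ys u; rewrite HD big_ord_recl; congr (_ + _).
  by apply: lie_ext => j; rewrite /upd /=; case: (j == 0)%N.
apply: eq_bigr => i _; apply: lie_ext => j.
rewrite /upd lift0 /=.
by case: (eqVneq j 0%N) => [->|jn0] //=.
Qed.

Lemma Tsum_add (R : zmodType) (mul : R -> R -> R) (Hm : nonassoc_ring mul) m D ys u v :
  Tsum mul m D ys (u + v) = Tsum mul m D ys u + Tsum mul m D ys v.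
Proof. by rewrite /Tsum -big_split; apply: eq_bigr => i _; rewrite lie_add0. Qed.

Lemma key (R : zmodType) (mul : R -> R -> R) (Hm : nonassoc_ring mul) m D :
  lie_n_derivation mul m.+2 D -> forall ys v w,
  let f := fun u => lie_poly mul m.+1 (upd ys 0 u) in
  f (D (v + w) - D v - D w) = D (f v + f w) - D (f v) - D (f w).
Proof.
move=> HD ys v w f.
have fadd : forall u1 u2, f (u1 + u2) = f u1 + f u2 by move=> u1 u2; exact: lie_add0.
rewrite !(addfB fadd) -fadd /f !(Dlie HD) (Tsum_add Hm).
by rewrite grp.
Qed.


Definition ad (R : zmodType) (mul : R -> R -> R) E z := commr mul z E.

Lemma lie_E (R : zmodType) (mul : R -> R -> R) E k u :
  lie_poly mul k (upd (fun _ => E) 0 u) = iter k (ad mul E) u.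
Proof. by elim: k => [|k IH] //; rewrite iterS -IH. Qed.

Lemma lie_Y (R : zmodType) (mul : R -> R -> R) E Y k u :
  lie_poly mul k.+1 (upd (fun j => if j == 1%N then Y else E) 0 u) =
  iter k (ad mul E) (commr mul u Y).
Proof. by elim: k => [|k IH] //; rewrite iterS -IH. Qed.

Lemma ad_add (R : zmodType) (mul : R -> R -> R) (Hm : nonassoc_ring mul) E u v :
  ad mul E (u + v) = ad mul E u + ad mul E v.
Proof. exact: commrDl. Qed.

Lemma iter_ad0 (R : zmodType) (mul : R -> R -> R) (Hm : nonassoc_ring mul) E k :
  iter k (ad mul E) 0 = 0.
Proof.
elim: k => [|k IH] //=; rewrite IH.
exact: (addf0 (ad_add Hm E)).
Qed.

Lemma ad_ptyp (R : zmodType) (mul : R -> R -> R) E a b z :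
  ptyp mul E a b z -> ad mul E z = (if b then z else 0) - (if a then z else 0).
Proof. by case=> h1 h2; rewrite /ad /commr h1 h2. Qed.

Definition P12 (R : zmodType) (mul : R -> R -> R) E x := mul E x - mul (mul E x) E.
Definition P21 (R : zmodType) (mul : R -> R -> R) E x := mul x E - mul (mul E x) E.

Lemma P12_ad (R : zmodType) (mul : R -> R -> R) (Hm : nonassoc_ring mul)
  (Ha : alternative mul) E (HE : mul E E = E) x :
  P12 mul E (ad mul E x) = - P12 mul E x.
Proof.
rewrite /P12 /ad /commr (nmulBr Hm) -(F3 Hm Ha) (F1 Hm Ha HE) (nmulBl Hm).
by rewrite (F2 Hm Ha HE) subrr subr0 opprB.
Qed.

Lemma P21_ad (R : zmodType) (mul : R -> R -> R) (Hm : nonassoc_ring mul)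
  (Ha : alternative mul) E (HE : mul E E = E) x :
  P21 mul E (ad mul E x) = P21 mul E x.
Proof.
rewrite /P21 /ad /commr (nmulBr Hm) -(F3 Hm Ha) (F1 Hm Ha HE) !(nmulBl Hm).
by rewrite !(F2 Hm Ha HE) subrr subr0.
Qed.

Lemma P12_iter (R : zmodType) (mul : R -> R -> R) (Hm : nonassoc_ring mul)
  (Ha : alternative mul) E (HE : mul E E = E) k x :
  P12 mul E (iter k (ad mul E) x) = if odd k then - P12 mul E x else P12 mul E x.
Proof.
elim: k => [|k IH] //=; rewrite (P12_ad Hm Ha HE) IH.
by case: (odd k) => //=; rewrite opprK.
Qed.

Lemma P21_iter (R : zmodType) (mul : R -> R -> R) (Hm : nonassoc_ring mul)
  (Ha : alternative mul) E (HE : mul E E = E) k x :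
  P21 mul E (iter k (ad mul E) x) = P21 mul E x.
Proof. by elim: k => [|k IH] //=; rewrite (P21_ad Hm Ha HE) IH. Qed.

Lemma P_of_iter0 (R : zmodType) (mul : R -> R -> R) (Hm : nonassoc_ring mul)
  (Ha : alternative mul) E (HE : mul E E = E) k x :
  iter k (ad mul E) x = 0 -> P12 mul E x = 0 /\ P21 mul E x = 0.
Proof.
move=> h.
have z12 : P12 mul E 0 = 0 by rewrite /P12 (nmul0r Hm) (nmul0l Hm) subrr.
have z21 : P21 mul E 0 = 0 by rewrite /P21 (nmul0r Hm) (nmul0l Hm) subrr.
have e12 := P12_iter Hm Ha HE k x; have e21 := P21_iter Hm Ha HE k x.
rewrite h z12 in e12; rewrite h z21 in e21.
split; last by [].
move: e12; case: (odd k) => e12; last by rewrite e12.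
by apply/eqP; rewrite -oppr_eq0 -e12.
Qed.

Lemma iter_eig (R : zmodType) (mul : R -> R -> R) (Hm : nonassoc_ring mul) E k w :
  ad mul E w = w \/ ad mul E w = - w ->
  iter k (ad mul E) w = w \/ iter k (ad mul E) w = - w.
Proof.
have adN : forall u, ad mul E (- u) = - ad mul E u.
  move=> u; rewrite -sub0r (addfB (ad_add Hm E)) (addf0 (ad_add Hm E)).
  by rewrite sub0r.
move=> [h|h]; elim: k => [|k IH] /=; try by left.
- by case: IH => ->; rewrite ?adN h; [left|right].
- by case: IH => ->; rewrite ?adN h ?opprK; [right|left].
Qed.


Lemma step23 (R : zmodType) (mul : R -> R -> R) (Hm : nonassoc_ring mul) E m D
  (HD : lie_n_derivation mul m.+2 D) A B Y :
  let s := D (A + B) - D A - D B in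
  ad mul E (commr mul s Y) = commr mul s Y \/ ad mul E (commr mul s Y) = - commr mul s Y ->
  ad mul E (commr mul B Y) = 0 ->
  commr mul s Y = 0.
Proof.
move=> s; rewrite /s => Heig HB.
have k1 := key Hm HD (fun j => if j == 1%N then Y else E) A B.
cbv beta zeta in k1; rewrite !lie_Y in k1.
have k2 := key Hm HD (fun _ => E) (iter m (ad mul E) (commr mul A Y))
   (iter m (ad mul E) (commr mul B Y)).
cbv beta zeta in k2; rewrite !lie_E in k2.
have hB0 : iter m.+1 (ad mul E) (iter m (ad mul E) (commr mul B Y)) = 0.
  by rewrite -iterD addSn iterSr HB iter_ad0.
rewrite hB0 addr0 subrr (D0 Hm HD) subr0 -k1 -iterD in k2.
have [h|h] := iter_eig Hm (m.+1 + m) Heig; rewrite h in k2; first by [].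
by apply/eqP; rewrite -oppr_eq0 k2.
Qed.

Unset Implicit Arguments. Set Strict Implicit.

Theorem lemma2p2 (R : zmodType) (mul : R -> R -> R) (e1 : R) (D : R -> R)
  (Hring : nonassoc_ring mul)
  (Halt : alternative mul)
  (He1 : nontrivial_idempotent mul e1)
  (Hi : forall a11 a22, in_peirce mul e1 true true a11 ->
          in_peirce mul e1 false false a22 ->
          (forall x, in_peirce mul e1 true false x -> commr mul (a11 + a22) x = 0) ->
          in_center mul (a11 + a22))
  (Hii : forall a11 a22, in_peirce mul e1 true true a11 ->
          in_peirce mul e1 false false a22 ->
          (forall x, in_peirce mul e1 false true x -> commr mul (a11 + a22) x = 0) ->
          in_center mul (a11 + a22))
  (HD : lie_type_derivation mul D) :
  forall a11 b, in_peirce mul e1 true true a11 ->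
    (in_peirce mul e1 true false b \/ in_peirce mul e1 false true b) ->
    exists z, in_center mul z /\ D (a11 + b) = D a11 + D b + z.
Proof.
move=> a11 b Ha11 Hb.
case: HD => n n2 HDn.
case: n n2 HDn => [|[|m]] // _ HD.
have HE : mul e1 e1 = e1 := He1.2.1.
have Hm := Hring.
pose s := D (a11 + b) - D a11 - D b.
exists s; split; last first.
  by rewrite /s -(addrA (D (a11 + b))) -opprD [RHS]addrC subrK.
have Ta := peirce_T Hm Halt HE Ha11.
have ada : ad mul e1 a11 = 0 by rewrite (ad_ptyp Ta) subrr.
have k := key Hm HD (fun _ => e1) a11 b.
cbv beta zeta in k; rewrite !lie_E (iterSr _ _ a11) ada (iter_ad0 Hm) add0r (D0 Hm HD) subr0 subrr in k.
have [p12 p21] := P_of_iter0 Hm Halt HE k.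
pose u := mul e1 s.
pose s11 := mul u e1.
pose s22 := (s - u) - mul (s - u) e1.
have Hs11 : in_peirce mul e1 true true s11 by exists s.
have Hs22 : in_peirce mul e1 false false s22 by exists s.
have hs : s = s11 + s22.
  move: p12 p21; rewrite /P12 /P21 -/u => /sub0_eq e12 /sub0_eq e21.
  rewrite -/s in e21; rewrite /s22 /s11 (nmulBl Hm) e21 subrr subr0 -e12 addrC subrK.
  by [].
have T11 := peirce_T Hm Halt HE Hs11.
have T22 := peirce_T Hm Halt HE Hs22.
case: Hb => Hb.
-
  have Tb := peirce_T Hm Halt HE Hb.
  have := Hii s11 s22 Hs11 Hs22; rewrite -hs; apply=> x Hx.
  have Tx := peirce_T Hm Halt HE Hx.
  apply: (step23 Hm (E := e1) HD).
  + left.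
    have [h1 h2] := L1 Hm Halt T11 Tx.
    have [h3 h4] := L2 Hm Halt T22 Tx.
    rewrite -/s hs /commr Hring.1 Hring.2 h1 h4 add0r addr0.
    by rewrite (addfB (ad_add Hm e1)) (ad_ptyp h2) (ad_ptyp h3) !subr0.
  + have [h1 h2] := L5 Hm Halt Tb Tx.
    rewrite /commr (addfB (ad_add Hm e1)) (ad_ptyp h1) (ad_ptyp h2).
    by rewrite !subrr.
- have Tb := peirce_T Hm Halt HE Hb.
  have := Hi s11 s22 Hs11 Hs22; rewrite -hs; apply=> x Hx.
  have Tx := peirce_T Hm Halt HE Hx.
  apply: (step23 Hm (E := e1) HD).
  + right.
    have [h1 h2] := L3 Hm Halt T11 Tx.
    have [h3 h4] := L4 Hm Halt T22 Tx.
    rewrite -/s hs /commr Hring.1 Hring.2 h2 h3 add0r addr0.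
    by rewrite (addfB (ad_add Hm e1)) (ad_ptyp h1) (ad_ptyp h4) !sub0r opprK opprB addrC.
  + have [h1 h2] := L5 Hm Halt Tx Tb.
    rewrite /commr (addfB (ad_add Hm e1)) (ad_ptyp h1) (ad_ptyp h2).
    by rewrite !subrr.
Qed.
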